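(* Let $G$ be a finite abelian group and $M$ a (small) category. Then the category $\mathrm{Fun}(M,\mathrm{Vect}_{\hat G})$ of all functors $M\to\mathrm{Vect}_{\hat G}$, with natural transformations as morphisms, is proto-abelian. If $M$ is finite (finitely many objects and finitely many morphisms), then $\mathrm{Fun}(M,\mathrm{Vect}_{\hat G})$ is finitary.
   Context: $\hat G=G\sqcup\{0\}$ with $0$ absorbing. $\mathrm{Vect}_{\hat G}$ has as objects finite pointed sets $(V,0_V)$ with an action of the monoid $\hat G$ ($0v=0_V$, $g0_V=0_V$) such that $G$ acts freely on $V\setminus\{0_V\}$; morphisms $f:V\to W$ satisfy $f(0_V)=0_W$, $f(gv)=gf(v)$, and $f(v_1)=f(v_2)\neq0_W\Rightarrow Gv_1=Gv_2$. A category with zero object and classes $\mathfrak M,\mathfrak E$ is proto-exact if: $0\to X\in\mathfrak M$, $X\to0\in\mathfrak E$; $\mathfrak M,\mathfrak E$ contain isomorphisms and are closed under composition; a commutative square with two parallel maps in $\mathfrak M$ and the other two in $\mathfrak E$ is a pullback iff it is a pushout; any cospan $X'\hookrightarrow Y'\twoheadleftarrow Y$ (mono in $\mathfrak M$, epi in $\mathfrak E$) and any span $X'\twoheadleftarrow X\hookrightarrow Y$ can be completed to such a bi-Cartesian square. Proto-abelian: $\mathfrak M$ = all monomorphisms, $\mathfrak E$ = all epimorphisms. Finitary: all Hom-sets and all $\mathrm{Ext}$-sets (equivalence classes of admissible short exact sequences $A\hookrightarrow B\twoheadrightarrow C$, i.e. bi-Cartesian squares with $0$ in the corner, modulo isomorphisms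 of the middle term compatible with the maps) are finite. *)

(* Defs.v *)
From HB Require Import structures.
From mathcomp Require Import all_boot all_fingroup.
From Stdlib Require List.

Set Implicit Arguments.
Unset Strict Implicit.
Unset Printing Implicit Defensive.

Local Open Scope group_scope.

Record CatData := {
  cobj :> Type;
  chom : cobj -> cobj -> Type;
  cheq : forall a b, chom a b -> chom a b -> Prop;
  cid : forall a, chom a a;
  ccomp : forall a b c, chom b c -> chom a b -> chom a c  (* ccomp g f = g o f *)
}.
Arguments chom {_}.
Arguments cheq {_ _ _}.
Arguments cid {_}.
Arguments ccomp {_ _ _ _}.

Section CatNotions.
Variable C : CatData.

Definition is_mono (a b : C) (f : chom a b) : Prop :=
  forall (x : C) (g h : chom x a), cheq (ccomp f g) (ccomp f h) -> cheq g h.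

Definition is_epi (a b : C) (f : chom a b) : Prop :=
  forall (x : C) (g h : chom b x), cheq (ccomp g f) (ccomp h f) -> cheq g h.

Definition is_iso (a b : C) (f : chom a b) : Prop :=
  exists g : chom b a, cheq (ccomp g f) (cid a) /\ cheq (ccomp f g) (cid b).

Definition is_zero_obj (z : C) : Prop :=
  forall x : C,
    (exists f : chom z x, forall g : chom z x, cheq g f) /\
    (exists f : chom x z, forall g : chom x z, cheq g f).

(* The square
       X  --i-->  Y
       |p         |q
       v          v
       X' --j-->  Y'                                                     *)
Definition comm_sq (X Y X' Y' : C) (i : chom X Y) (p : chom X X')
  (q : chom Y Y') (j : chom X' Y') : Prop :=
  cheq (ccomp q i) (ccomp j p).

Definition is_pullback (X Y X' Y' : C) (i : chom X Y) (p : chom X X')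
  (q : chom Y Y') (j : chom X' Y') : Prop :=
  comm_sq i p q j /\
  forall (W : C) (u : chom W Y) (v : chom W X'),
    cheq (ccomp q u) (ccomp j v) ->
    exists w : chom W X,
      (cheq (ccomp i w) u /\ cheq (ccomp p w) v) /\
      forall w' : chom W X, cheq (ccomp i w') u -> cheq (ccomp p w') v ->
        cheq w' w.

Definition is_pushout (X Y X' Y' : C) (i : chom X Y) (p : chom X X')
  (q : chom Y Y') (j : chom X' Y') : Prop :=
  comm_sq i p q j /\
  forall (W : C) (u : chom Y W) (v : chom X' W),
    cheq (ccomp u i) (ccomp v p) ->
    exists w : chom Y' W,
      (cheq (ccomp w q) u /\ cheq (ccomp w j) v) /\
      forall w' : chom Y' W, cheq (ccomp w' q) u -> cheq (ccomp w' j) v ->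
        cheq w' w.

Definition is_bicartesian (X Y X' Y' : C) (i : chom X Y) (p : chom X X')
  (q : chom Y Y') (j : chom X' Y') : Prop :=
  is_pullback i p q j /\ is_pushout i p q j.

Definition morph_class := forall a b : C, chom a b -> Prop.

Definition proto_exact (Mc Ec : morph_class) : Prop :=
  (exists z : C, is_zero_obj z /\
     (forall (x : C) (f : chom z x), Mc _ _ f) /\
     (forall (x : C) (f : chom x z), Ec _ _ f)) /\
  (forall (a b : C) (f : chom a b), is_iso f -> Mc _ _ f /\ Ec _ _ f) /\
  (forall (a b c : C) (f : chom a b) (g : chom b c),
     Mc _ _ f -> Mc _ _ g -> Mc _ _ (ccomp g f)) /\
  (forall (a b c : C) (f : chom a b) (g : chom b c),
     Ec _ _ f -> Ec _ _ g -> Ec _ _ (ccomp g f)) /\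
  (forall (X Y X' Y' : C) (i : chom X Y) (p : chom X X') (q : chom Y Y')
          (j : chom X' Y'),
     Mc _ _ i -> Mc _ _ j -> Ec _ _ p -> Ec _ _ q -> comm_sq i p q j ->
     (is_pullback i p q j <-> is_pushout i p q j)) /\
  (forall (Y X' Y' : C) (q : chom Y Y') (j : chom X' Y'),
     Mc _ _ j -> Ec _ _ q ->
     exists (X : C) (i : chom X Y) (p : chom X X'),
       Mc _ _ i /\ Ec _ _ p /\ is_bicartesian i p q j) /\
  (forall (X Y X' : C) (i : chom X Y) (p : chom X X'),
     Mc _ _ i -> Ec _ _ p ->
     exists (Y' : C) (q : chom Y Y') (j : chom X' Y'),
       Mc _ _ j /\ Ec _ _ q /\ is_bicartesian i p q j).

Definition proto_abelian : Prop := proto_exact is_mono is_epi.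

Definition hom_finite (a b : C) : Prop :=
  exists l : list (chom a b), forall f : chom a b,
    exists g, List.In g l /\ cheq f g.

Record ses_data (A Cc : C) := SesData {
  ses_mid : C;
  ses_i : chom A ses_mid;
  ses_p : chom ses_mid Cc
}.

(* admissible short exact sequence: bicartesian square with 0 in the corner
       A --i--> B
       |        |p
       v        v
       0 -----> C                                                        *)
Definition is_adm_ses (Mc Ec : morph_class) (z : C) (A Cc : C)
  (s : ses_data A Cc) : Prop :=
  Mc _ _ (ses_i s) /\ Ec _ _ (ses_p s) /\
  exists (u : chom A z) (v : chom z Cc),
    is_bicartesian (ses_i s) u (ses_p s) v.

Definition ses_equiv (A Cc : C) (s t : ses_data A Cc) : Prop :=
  exists phi : chom (ses_mid s) (ses_mid t),
    is_iso phi /\ cheq (ccomp phi (ses_i s)) (ses_i t) /\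
    cheq (ccomp (ses_p t) phi) (ses_p s).

Definition ext_finite (Mc Ec : morph_class) (z : C) (A Cc : C) : Prop :=
  exists l : list (ses_data A Cc),
    (forall s, List.In s l -> is_adm_ses Mc Ec z s) /\
    forall s, is_adm_ses Mc Ec z s ->
      exists t, List.In t l /\ ses_equiv s t.

Definition finitary (Mc Ec : morph_class) : Prop :=
  (forall a b : C, hom_finite a b) /\
  (forall z : C, is_zero_obj z -> forall A Cc : C, ext_finite Mc Ec z A Cc).

End CatNotions.

Section Vect.
Variable gT : finGroupType.

(* finite pointed set with a \hat G action (0 acts by the constant map to
   the base point, which needs no data), G acting freely off the base point *)
Record VObj := {
  vcar : finType;
  vzero : vcar;
  vact : gT -> vcar -> vcar;
  vact1 : forall v, vact 1 v = v;
  vactM : forall g h v, vact (g * h) v = vact g (vact h v);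
  vact0 : forall g, vact g vzero = vzero;
  vfree : forall g v, v <> vzero -> vact g v = v -> g = 1
}.

Record VMor (V W : VObj) := {
  vfun : vcar V -> vcar W;
  vfun0 : vfun (vzero V) = vzero W;
  vfunE : forall g v, vfun (vact g v) = vact g (vfun v);
  vfun_orb : forall v1 v2, vfun v1 = vfun v2 -> vfun v1 <> vzero W ->
               exists g, v1 = vact g v2
}.

Definition VMor_id (V : VObj) : VMor V V.
Proof.
refine (@Build_VMor V V (fun v => v) _ _ _) => //.
by move=> v1 v2 -> _; exists 1; rewrite vact1.
Defined.

Definition VMor_comp (U V W : VObj) (g : VMor V W) (f : VMor U V) : VMor U W.
Proof.
refine (@Build_VMor U W (fun x => vfun g (vfun f x)) _ _ _).
- by rewrite !vfun0.
- by move=> h v; rewrite !vfunE.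
- move=> v1 v2 e nz.
  have nzf : vfun f v1 <> vzero V.
    by move=> ef; apply: nz; rewrite ef vfun0.
  have [h eh] := vfun_orb e nz.
  have e2 : vfun f v1 = vfun f (vact h v2) by rewrite vfunE.
  have [k ek] := vfun_orb e2 nzf.
  by exists (k * h); rewrite vactM.
Defined.

End Vect.

Record SCat := {
  sobj : Type;
  shom : sobj -> sobj -> Type;
  sid : forall a, shom a a;
  scomp : forall a b c, shom b c -> shom a b -> shom a c;
  scomp1l : forall a b (f : shom a b), scomp (sid b) f = f;
  scomp1r : forall a b (f : shom a b), scomp f (sid a) = f;
  scompA : forall a b c d (f : shom a b) (g : shom b c) (h : shom c d),
      scomp h (scomp g f) = scomp (scomp h g) f
}.
Arguments shom {s}.
Arguments sid {s}.
Arguments scomp {s a b c}.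

Definition finite_type (T : Type) : Prop :=
  exists l : list T, forall x : T, List.In x l.

Definition finite_scat (M : SCat) : Prop :=
  finite_type (sobj M) /\ forall a b : sobj M, finite_type (shom a b).

Section FunCat.
Variables (gT : finGroupType) (M : SCat).

Record VFun := {
  fobj : sobj M -> VObj gT;
  fmor : forall a b : sobj M, shom a b -> VMor (fobj a) (fobj b);
  fmor_id : forall a x, vfun (fmor (sid a)) x = x;
  fmor_comp : forall a b c (f : shom a b) (g : shom b c) x,
      vfun (fmor (scomp g f)) x = vfun (fmor g) (vfun (fmor f) x)
}.
Arguments fmor _ {a b}.

Record VNat (F F' : VFun) := {
  ntc : forall a, VMor (fobj F a) (fobj F' a);
  ntnat : forall a b (f : shom a b) x,
      vfun (ntc b) (vfun (fmor F f) x) = vfun (fmor F' f) (vfun (ntc a) x)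
}.

Definition VNat_eq (F F' : VFun) (s t : VNat F F') : Prop :=
  forall a x, vfun (ntc s a) x = vfun (ntc t a) x.

Definition VNat_id (F : VFun) : VNat F F.
Proof. by refine (@Build_VNat F F (fun a => VMor_id _) _). Defined.

Definition VNat_comp (F F' F'' : VFun) (t : VNat F' F'') (s : VNat F F') :
  VNat F F''.
Proof.
refine (@Build_VNat F F'' (fun a => VMor_comp (ntc t a) (ntc s a)) _).
by move=> a b f x /=; rewrite ntnat ntnat.
Defined.

Definition FunCat : CatData :=
  {| cobj := VFun; chom := VNat; cheq := VNat_eq; cid := VNat_id;
     ccomp := VNat_comp |}.

End FunCat.

(* Main.v *)
Require Import Defs.
From HB Require Import structures.
From mathcomp Require Import all_boot all_fingroup.
From Stdlib Require Import ClassicalEpsilon.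
From Stdlib Require List.

Set Implicit Arguments.
Unset Strict Implicit.
Unset Printing Implicit Defensive.
Local Open Scope group_scope.

Section Basic.
Variable gT : finGroupType.

Lemma vactK (V : VObj gT) g (v : vcar V) : vact g^-1 (vact g v) = v.
Proof. by rewrite -vactM mulVg vact1. Qed.

Lemma vact_eq0 (V : VObj gT) g (v : vcar V) : vact g v = vzero V -> v = vzero V.
Proof. by move=> e; rewrite -(vactK g v) e vact0. Qed.

Lemma vfun_inj_nz (V W : VObj gT) (f : VMor V W) v1 v2 :
  vfun f v1 = vfun f v2 -> vfun f v1 <> vzero W -> v1 = v2.
Proof.
move=> e nz; have [g eg] := vfun_orb e nz.
have g1 : g = 1.
  by apply: (vfree nz); rewrite {2}eg vfunE -e.
by rewrite eg g1 vact1.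
Qed.

Definition VMor0 (V W : VObj gT) : VMor V W.
Proof.
refine (@Build_VMor gT V W (fun _ => vzero W) _ _ _) => //.
by move=> g v; rewrite vact0.
Defined.

Definition VUnit : VObj gT.
Proof.
refine (@Build_VObj gT unit tt (fun _ _ => tt) _ _ _ _) => //.
- by case.
- by move=> g [] h; case: h.
Defined.

End Basic.

Section Fun.
Variables (gT : finGroupType) (M : SCat).
Notation VF := (VFun gT M).
Local Notation ap t a := (vfun (ntc t a)).
Local Notation fm F f := (vfun (fmor F f)).

Definition VNat0 (F F' : VF) : VNat F F'.
Proof.
refine (@Build_VNat gT M F F' (fun a => VMor0 _ _) _).
by move=> a b f x /=; rewrite vfun0.
Defined.

Definition Z0 : VF.
Proof.
refine (@Build_VFun gT M (fun _ => VUnit gT) (fun a b f => VMor_id _) _ _) => //.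
Defined.

Section Sub.
Local Unset Implicit Arguments.
Variables (Y : VF) (S : forall a, pred (vcar (fobj Y a)))
  (S0 : forall a, S a (vzero _))
  (Sact : forall a g y, S a y -> S a (vact g y))
  (Smap : forall a b (f : shom a b) y, S a y -> S b (fm Y f y)).
Local Set Implicit Arguments.

Definition SubObj (a : sobj M) : VObj gT.
Proof.
refine (@Build_VObj gT {y : vcar (fobj Y a) | S a y} (exist _ (vzero _) (S0 a))
  (fun g e => exist _ (vact g (val e)) (Sact _ g _ (valP e))) _ _ _ _).
- by move=> [v h]; apply: val_inj; rewrite /= vact1.
- by move=> g h [v hv]; apply: val_inj; rewrite /= vactM.
- by move=> g; apply: val_inj; rewrite /= vact0.
- move=> g [v hv] ne eq; apply: (@vfree _ _ g v).
    by move=> e; apply: ne; apply: val_inj.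
  exact: (congr1 val eq).
Defined.

Definition SubMor a b (f : shom a b) : VMor (SubObj a) (SubObj b).
Proof.
refine (@Build_VMor gT (SubObj a) (SubObj b)
  (fun e => exist _ (fm Y f (val e)) (Smap _ _ f _ (valP e))) _ _ _).
- by apply: val_inj; rewrite /= vfun0.
- by move=> g e; apply: val_inj; rewrite /= vfunE.
- move=> e1 e2 eq nz.
  have eq' := congr1 val eq.
  have [|g eg] := vfun_orb eq'.
    by move=> h; apply: nz; apply: val_inj.
  by exists g; apply: val_inj.
Defined.

Definition SubF : VF.
Proof.
refine (@Build_VFun gT M SubObj SubMor _ _).
- by move=> a x; apply: val_inj; rewrite /= fmor_id.
- by move=> a b c f g x; apply: val_inj; rewrite /= fmor_comp.
Defined.

Definition SubInclMor (a : sobj M) : VMor (SubObj a) (fobj Y a).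
Proof.
refine (@Build_VMor gT (SubObj a) (fobj Y a) (fun e => val e) _ _ _) => //.
by move=> v1 v2 e _; exists 1; rewrite vact1; apply: val_inj.
Defined.

Definition SubIncl : VNat SubF Y.
Proof. by refine (@Build_VNat gT M SubF Y SubInclMor _). Defined.

Lemma SubIncl_inj a : injective (ap SubIncl a).
Proof. exact: val_inj. Qed.

End Sub.

Section Quot.
Local Unset Implicit Arguments.
Variables (Y : VF) (S : forall a, pred (vcar (fobj Y a)))
  (S0 : forall a, S a (vzero _))
  (Sact : forall a g y, S a y -> S a (vact g y))
  (Smap : forall a b (f : shom a b) y, S a y -> S b (fm Y f y)).
Local Set Implicit Arguments.

Lemma SactN a g y : ~~ S a y -> ~~ S a (vact g y).
Proof. by apply: contra => h; rewrite -(vactK g y); apply: Sact. Qed.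

Local Notation qT a := (option {y : vcar (fobj Y a) | ~~ S a y}).

Definition qact (a : sobj M) g (q : qT a) : qT a :=
  omap (fun e => exist _ (vact g (val e)) (SactN g (valP e))) q.

Lemma ne0 a (y : vcar (fobj Y a)) : ~~ S a y -> y <> vzero _.
Proof. by move=> h e; move: h; rewrite e S0. Qed.

Definition QuotObj (a : sobj M) : VObj gT.
Proof.
refine (@Build_VObj gT (qT a) None (@qact a) _ _ _ _).
- by case=> // -[v h]; congr Some; apply: val_inj; rewrite /= vact1.
- by move=> g h [[v hv]|] //; congr Some; apply: val_inj; rewrite /= vactM.
- by [].
- move=> g [[v hv]|] // _ eq; apply: (@vfree _ _ g v (ne0 hv)).
  by case: eq.
Defined.

Lemma insub_act a g (y : vcar (fobj Y a)) :
  (insub (vact g y) : qT a) = qact g (insub y).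
Proof.
case: (boolP (S a y)) => h.
  rewrite [in LHS]insubN ?negbK; last by apply: Sact.
  by rewrite insubN ?negbK.
rewrite (insubT (fun y => ~~ S a y) h) (insubT (fun y => ~~ S a y) (SactN g h)) /=.
by congr Some; apply: val_inj.
Qed.

Definition qmor a b (f : shom a b) (q : qT a) : qT b :=
  if q is Some e then insub (fm Y f (val e)) else None.

Lemma insub_val a (y : vcar (fobj Y a)) e : (insub y : qT a) = Some e -> val e = y.
Proof. by case: insubP => // u _ <- [<-]. Qed.

Lemma insub_None a (y : vcar (fobj Y a)) : (insub y : qT a) = None -> S a y.
Proof. by case: insubP => // /negPn. Qed.

Definition QuotMor a b (f : shom a b) : VMor (QuotObj a) (QuotObj b).
Proof.
refine (@Build_VMor gT (QuotObj a) (QuotObj b) (@qmor a b f) _ _ _).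
- by [].
- by move=> g [[v hv]|] //=; rewrite vfunE insub_act.
- move=> [e1|] [e2|] //= eq nz; try by [case: nz | rewrite eq in nz].
  case E: (insub _) nz eq => [e|] // _ E2.
  have h1 := insub_val E; have h2 := insub_val (esym E2).
  have nz' : fm Y f (val e1) <> vzero _ by rewrite -h1; apply: ne0 (valP e).
  have [g eg] := vfun_orb (etrans (esym h1) h2) nz'.
  by exists g; congr Some; apply: val_inj.
Defined.

Definition QuotF : VF.
Proof.
refine (@Build_VFun gT M QuotObj QuotMor _ _).
- by move=> a [e|] //=; rewrite fmor_id valK.
- move=> a b c f g [e|] //=; rewrite fmor_comp.
  case: (boolP (S b (fm Y f (val e)))) => h.
    rewrite (insubN _ (x := fm Y f (val e))) ?negbK //.
    by rewrite insubN ?negbK //; apply: Smap.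
  by rewrite (insubT (fun y => ~~ S b y) h).
Defined.

Definition QuotPiMor (a : sobj M) : VMor (fobj Y a) (QuotObj a).
Proof.
refine (@Build_VMor gT (fobj Y a) (QuotObj a) (fun y => insub y) _ _ _).
- by rewrite insubN // negbK.
- by move=> g v; rewrite insub_act.
- move=> v1 v2 e nz; exists 1; rewrite vact1.
  case E: (insub v1) nz e => [u|] // _ E2.
  by rewrite -(insub_val E) (insub_val (esym E2)).
Defined.

Definition QuotPi : VNat Y QuotF.
Proof.
refine (@Build_VNat gT M Y QuotF QuotPiMor _).
move=> a b f x /=.
case: (boolP (S a x)) => h.
  rewrite (insubN _ (x := x)) ?negbK //.
  by rewrite insubN ?negbK //; apply: Smap.
by rewrite (insubT (fun y => ~~ S a y) h).
Defined.

Lemma QuotPi_None a y : ap QuotPi a y = None <-> S a y.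
Proof.
split; first exact: insub_None.
by move=> h; rewrite /= insubN // negbK.
Qed.

Lemma QuotPi_Some a y e : ap QuotPi a y = Some e -> val e = y.
Proof. exact: insub_val. Qed.

Lemma QuotPi_surj a (q : vcar (fobj QuotF a)) : exists y, ap QuotPi a y = q.
Proof.
case: q => [e|]; first by exists (val e); rewrite /= valK.
by exists (vzero _); rewrite /= insubN // negbK.
Qed.

End Quot.

Section FMono.
Variables (X Y W : VF) (i : VNat X Y) (u : VNat W Y).
Hypotheses (iinj : forall a, injective (ap i a))
  (hu : forall a w, exists x, ap i a x = ap u a w).

Definition fmfun (a : sobj M) (w : vcar (fobj W a)) : vcar (fobj X a) :=
  if [pick x | ap i a x == ap u a w] is Some x then x else vzero _.

Lemma fmfunP a w : ap i a (fmfun w) = ap u a w.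
Proof.
rewrite /fmfun; case: pickP => [x /eqP //|H].
by have [x hx] := hu w; move: (H x); rewrite hx eqxx.
Qed.

Definition FMmor (a : sobj M) : VMor (fobj W a) (fobj X a).
Proof.
refine (@Build_VMor gT _ _ (@fmfun a) _ _ _).
- by apply: iinj; rewrite fmfunP !vfun0.
- by move=> g w; apply: iinj; rewrite vfunE !fmfunP vfunE.
- move=> w1 w2 e nz.
  have e' : ap u a w1 = ap u a w2 by rewrite -!fmfunP e.
  apply: (vfun_orb e') => h; apply: nz; apply: iinj.
  by rewrite fmfunP h vfun0.
Defined.

Definition FM : VNat W X.
Proof.
refine (@Build_VNat gT M W X FMmor _).
move=> a b f w /=; apply: iinj.
by rewrite !fmfunP !ntnat !fmfunP.
Defined.

Lemma FMP a w : ap i a (ap FM a w) = ap u a w.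
Proof. exact: fmfunP. Qed.

End FMono.

Section FEpi.
Variables (Y Y' W : VF) (q : VNat Y Y') (u : VNat Y W).
Hypotheses (qsurj : forall a y', exists y, ap q a y = y')
  (hu : forall a y1 y2, ap q a y1 = ap q a y2 -> ap u a y1 = ap u a y2).

Definition fefun (a : sobj M) (y' : vcar (fobj Y' a)) : vcar (fobj W a) :=
  if [pick y | ap q a y == y'] is Some y then ap u a y else vzero _.

Lemma fefunP a y : fefun (ap q a y) = ap u a y.
Proof.
rewrite /fefun; case: pickP => [y0 /eqP e|H]; first exact: hu.
by move: (H y); rewrite eqxx.
Qed.

Definition FEmor (a : sobj M) : VMor (fobj Y' a) (fobj W a).
Proof.
refine (@Build_VMor gT _ _ (@fefun a) _ _ _).
- by rewrite -(vfun0 (ntc q a)) fefunP vfun0.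
- by move=> g y'; have [y <-] := qsurj y'; rewrite -vfunE !fefunP vfunE.
- move=> y1' y2'; have [y1 <-] := qsurj y1'; have [y2 <-] := qsurj y2'.
  rewrite !fefunP => e nz; have [g eg] := vfun_orb e nz.
  by exists g; rewrite eg vfunE.
Defined.

Definition FE : VNat Y' W.
Proof.
refine (@Build_VNat gT M Y' W FEmor _).
move=> a b f y' /=; have [y <-] := qsurj y'.
by rewrite -ntnat !fefunP ntnat.
Defined.

Lemma FEP a y : ap FE a (ap q a y) = ap u a y.
Proof. exact: fefunP. Qed.

End FEpi.

Notation C := (FunCat gT M).

Lemma mono_inj (F F' : VF) (t : VNat F F') :
  is_mono (C:=C) t <-> forall a, injective (ap t a).
Proof.
split; last first.
  by move=> Hi X g h H a x; apply: (Hi a); exact: H a x.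
move=> Hm.
pose S a := fun x : vcar (fobj F a) => ap t a x == vzero _.
have S0 : forall a, S a (vzero _) by move=> a; rewrite /S vfun0.
have Sact : forall a g y, S a y -> S a (vact g y).
  by move=> a g x /eqP h; rewrite /S vfunE h vact0.
have Smap : forall a b (f : shom a b) y, S a y -> S b (fm F f y).
  by move=> a b f x /eqP h; rewrite /S ntnat h vfun0.
have H := Hm _ (SubIncl S0 Sact Smap) (VNat0 _ _).
have ker0 : forall a x, ap t a x = vzero _ -> x = vzero _.
  move=> a x hx.
  have := H _ a (exist _ x (introT eqP hx)); apply.
  by move=> b e /=; rewrite (eqP (valP e)) vfun0.
move=> a x1 x2 e.
case: (eqVneq (ap t a x1) (vzero _)) => h.
  by rewrite (ker0 _ _ h) (ker0 a x2) // -e.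
by apply: (vfun_inj_nz e); apply/eqP.
Qed.

Lemma epi_surj (F F' : VF) (t : VNat F F') :
  is_epi (C:=C) t <-> forall a y, exists x, ap t a x = y.
Proof.
split; last first.
  by move=> Hs X g h H a y; have [x <-] := Hs a y; exact: H a x.
move=> He.
pose S a := fun y : vcar (fobj F' a) => [exists x, ap t a x == y].
have S0 : forall a, S a (vzero _).
  by move=> a; apply/existsP; exists (vzero _); rewrite vfun0.
have Sact : forall a g y, S a y -> S a (vact g y).
  move=> a g y /existsP [x /eqP <-]; apply/existsP; exists (vact g x).
  by rewrite vfunE.
have Smap : forall a b (f : shom a b) y, S a y -> S b (fm F' f y).
  move=> a b f y /existsP [x /eqP <-]; apply/existsP; exists (fm F f x).
  by rewrite ntnat.
have H := He _ (QuotPi S0 Sact Smap) (VNat0 _ _).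
move=> a y.
have : S a y.
  apply/(QuotPi_None S0 Sact Smap); apply: H => b x /=.
  rewrite insubN // negbK; apply/existsP; by exists x.
by move/existsP => [x /eqP <-]; exists x.
Qed.

End Fun.

Section Squares.
Variables (gT : finGroupType) (M : SCat).
Notation VF := (VFun gT M).
Local Notation ap t a := (vfun (ntc t a)).
Local Notation fm F f := (vfun (fmor F f)).
Notation C := (FunCat gT M).

Definition PP (X Y X' Y' : VF) (i : VNat X Y) (q : VNat Y Y') (j : VNat X' Y') :=
  forall a y x', ap q a y = ap j a x' -> exists x, ap i a x = y.

Variables (X Y X' Y' : VF) (i : VNat X Y) (p : VNat X X') (q : VNat Y Y')
  (j : VNat X' Y').

Lemma PP_pullback : (forall a, injective (ap i a)) -> (forall a, injective (ap j a)) ->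
  comm_sq (C:=C) i p q j -> PP i q j -> is_pullback (C:=C) i p q j.
Proof.
move=> iinj jinj Hc PPh; split => // W u v H.
have Hc' : forall a x, ap q a (ap i a x) = ap j a (ap p a x) := Hc.
have H' : forall a w, ap q a (ap u a w) = ap j a (ap v a w) := H.
have hu : forall a w, exists x, ap i a x = ap u a w.
  by move=> a w; exact: (PPh a _ (ap v a w) (H' a w)).
exists (FM iinj hu); split; first split.
- by move=> a w /=; rewrite (FMP iinj hu).
- move=> a w /=; apply: (jinj a).
  by rewrite -Hc' (FMP iinj hu) H'.
- move=> w' h1 h2 a w; apply: (iinj a); rewrite (FMP iinj hu); exact: (h1 a w).
Qed.

Lemma pullback_PP : (forall a, injective (ap j a)) ->
  is_pullback (C:=C) i p q j -> PP i q j.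
Proof.
move=> jinj [Hc Hp] a y x' ey.
pose S b := fun y : vcar (fobj Y b) => [exists x', ap q b y == ap j b x'].
have S0 : forall b, S b (vzero _).
  by move=> b; apply/existsP; exists (vzero _); rewrite !vfun0.
have Sact : forall b g y, S b y -> S b (vact g y).
  move=> b g z /existsP [z' /eqP h]; apply/existsP; exists (vact g z').
  by rewrite !vfunE h.
have Smap : forall b c (f : shom b c) y, S b y -> S c (fm Y f y).
  move=> b c f z /existsP [z' /eqP h]; apply/existsP; exists (fm X' f z').
  by rewrite ntnat h -ntnat.
pose incl := SubIncl S0 Sact Smap.
have hv : forall b e, exists x', ap j b x' = ap (VNat_comp q incl) b e.
  by move=> b e; have /existsP [x'' /eqP h] := valP e; exists x''; rewrite /= h.
pose v := FM jinj hv.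
have [|w [[h1 h2] _]] := Hp _ incl v.
  by move=> b z /=; rewrite (FMP jinj hv).
have hy : S a y by apply/existsP; exists x'; rewrite ey.
by exists (ap w a (exist _ y hy)); exact: (h1 a (exist _ y hy)).
Qed.

Lemma PP_pushout : (forall a y, exists x, ap p a x = y) ->
  (forall a y, exists x, ap q a x = y) -> (forall a, injective (ap j a)) ->
  comm_sq (C:=C) i p q j -> PP i q j -> is_pushout (C:=C) i p q j.
Proof.
move=> psurj qsurj jinj Hc PPh; split => // W u v H.
have Hc' : forall a x, ap q a (ap i a x) = ap j a (ap p a x) := Hc.
have H' : forall a x, ap u a (ap i a x) = ap v a (ap p a x) := H.
have hu : forall a y1 y2, ap q a y1 = ap q a y2 -> ap u a y1 = ap u a y2.
  move=> a.
  have k0 : forall y, ap q a y = vzero _ -> ap u a y = vzero _.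
    move=> y hy; have [|x hx] := PPh a y (vzero _); first by rewrite vfun0.
    have hp : ap p a x = vzero _.
      by apply: (jinj a); rewrite vfun0 -Hc' hx hy.
    by rewrite -hx H' hp vfun0.
  move=> y1 y2 e.
  case: (eqVneq (ap q a y1) (vzero _)) => h.
    by rewrite !k0 // -e.
  by congr (ap u a _); apply: (vfun_inj_nz e); apply/eqP.
exists (FE qsurj hu); split; first split.
- move=> a y; exact: (FEP qsurj hu).
- move=> a x'; have [x <-] := psurj a x'.
  transitivity (ap (FE qsurj hu) a (ap j a (ap p a x))); first by [].
  by rewrite -Hc' (FEP qsurj hu) H'.
- move=> w' h1 h2 a y'; have [y <-] := qsurj a y'.
  rewrite (FEP qsurj hu); exact: (h1 a y).
Qed.

Lemma pushout_PP : is_pushout (C:=C) i p q j -> PP i q j.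
Proof.
move=> [Hc Hp] a y x' e.
pose S b := fun y : vcar (fobj Y b) => [exists x, ap i b x == y].
have S0 : forall b, S b (vzero _).
  by move=> b; apply/existsP; exists (vzero _); rewrite !vfun0.
have Sact : forall b g y, S b y -> S b (vact g y).
  move=> b g z /existsP [z' /eqP h]; apply/existsP; exists (vact g z').
  by rewrite !vfunE h.
have Smap : forall b c (f : shom b c) y, S b y -> S c (fm Y f y).
  move=> b c f z /existsP [z' /eqP h]; apply/existsP; exists (fm X f z').
  by rewrite ntnat h.
have [|w [[h1 h2] _]] := Hp _ (QuotPi S0 Sact Smap) (VNat0 _ _).
  move=> b x /=; rewrite insubN // negbK; apply/existsP; by exists x.
have : S a y.
  apply/(QuotPi_None S0 Sact Smap).
  by rewrite -(h1 a y) /= e; exact: (h2 a x').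
by move/existsP => [x /eqP <-]; exists x.
Qed.

End Squares.

Section ProtoAb.
Variables (gT : finGroupType) (M : SCat).
Notation VF := (VFun gT M).
Local Notation ap t a := (vfun (ntc t a)).
Local Notation fm F f := (vfun (fmor F f)).
Notation C := (FunCat gT M).

Lemma proto_ab : proto_abelian C.
Proof.
rewrite /proto_abelian /proto_exact.
split.
  exists (Z0 gT M); split; [|split].
  - move=> x; split.
      by exists (VNat0 (Z0 gT M) x) => g a [] /=; rewrite -[tt]/(vzero (VUnit gT)) vfun0.
    by exists (VNat0 x (Z0 gT M)) => g a y /=; case: (vfun (ntc g a) y).
  - by move=> x f W g h _ a w; case: (vfun (ntc g a) w); case: (vfun (ntc h a) w).
  - by move=> x f W g h _ a []; rewrite -[tt]/(vzero (VUnit gT)) !vfun0.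
split.
  move=> a b f [g [h1 h2]].
  have h1' : forall c x, ap g c (ap f c x) = x := h1.
  have h2' : forall c x, ap f c (ap g c x) = x := h2.
  split.
    move=> W u v H c w; have H' : forall c w, ap f c (ap u c w) = ap f c (ap v c w) := H.
    by rewrite -(h1' c (ap u c w)) H' h1'.
  move=> W u v H c y; have H' : forall c y, ap u c (ap f c y) = ap v c (ap f c y) := H.
  by rewrite -(h2' c y) H'.
split.
  move=> a b c f g Hf Hg W u v H; apply: Hf; apply: Hg; exact: H.
split.
  move=> a b c f g Hf Hg W u v H; apply: Hg; apply: Hf; exact: H.
split.
  move=> X Y X' Y' i p q j /mono_inj iinj /mono_inj jinj /epi_surj psurj
    /epi_surj qsurj Hc; split => H.
    by apply: PP_pushout => //; exact: pullback_PP jinj H.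
  by apply: PP_pullback => //; exact: pushout_PP H.
split.
  move=> Y X' Y' q j /mono_inj jinj /epi_surj qsurj.
  pose S b := fun y : vcar (fobj Y b) => [exists x', ap q b y == ap j b x'].
  have S0 : forall b, S b (vzero _).
    by move=> b; apply/existsP; exists (vzero _); rewrite !vfun0.
  have Sact : forall b g y, S b y -> S b (vact g y).
    move=> b g z /existsP [z' /eqP h]; apply/existsP; exists (vact g z').
    by rewrite !vfunE h.
  have Smap : forall b c (f : shom b c) y, S b y -> S c (fm Y f y).
    move=> b c f z /existsP [z' /eqP h]; apply/existsP; exists (fm X' f z').
    by rewrite ntnat h -ntnat.
  pose incl := SubIncl S0 Sact Smap.
  have hv : forall b e, exists x', ap j b x' = ap (VNat_comp q incl) b e.
    by move=> b e; have /existsP [x'' /eqP h] := valP e; exists x''; rewrite /= h.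
  pose p := FM jinj hv.
  have iinj : forall a, injective (ap incl a) by move=> a; exact: val_inj.
  have psurj : forall a x', exists e, ap p a e = x'.
    move=> a x'; have [y hy] := qsurj a (ap j a x').
    have hS : S a y by apply/existsP; exists x'; rewrite hy.
    exists (exist _ y hS); apply: (jinj a).
    by rewrite (FMP jinj hv) /= hy.
  have Hc : comm_sq (C:=C) incl p q j.
    by move=> a e; exact: esym (FMP jinj hv e).
  have HP : PP incl q j.
    move=> a y x' e.
    have hS : S a y by apply/existsP; exists x'; rewrite e.
    by exists (exist _ y hS).
  exists (SubF S0 Sact Smap), incl, p.
  split; first exact/mono_inj.
  split; first exact/epi_surj.
  split; first exact: PP_pullback.
  exact: PP_pushout.
move=> X Y X' i p /mono_inj iinj /epi_surj psurj.
pose S b := fun y : vcar (fobj Y b) =>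
  [exists x, (ap p b x == vzero _) && (ap i b x == y)].
have S0 : forall b, S b (vzero _).
  by move=> b; apply/existsP; exists (vzero _); rewrite !vfun0 !eqxx.
have Sact : forall b g y, S b y -> S b (vact g y).
  move=> b g z /existsP [z' /andP [/eqP h0 /eqP h]]; apply/existsP.
  by exists (vact g z'); rewrite !vfunE h h0 vact0 !eqxx.
have Smap : forall b c (f : shom b c) y, S b y -> S c (fm Y f y).
  move=> b c f z /existsP [z' /andP [/eqP h0 /eqP h]]; apply/existsP.
  by exists (fm X f z'); rewrite !ntnat h h0 vfun0 !eqxx.
have Sp0 : forall a x, S a (ap i a x) -> ap p a x = vzero _.
  move=> a x /existsP [x0 /andP [/eqP h0 /eqP h]].
  by rewrite -(iinj a _ _ h).
pose pi := QuotPi S0 Sact Smap.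
have hu : forall a x1 x2, ap p a x1 = ap p a x2 ->
    ap (VNat_comp pi i) a x1 = ap (VNat_comp pi i) a x2.
  move=> a x1 x2 e.
  case: (eqVneq (ap p a x1) (vzero _)) => h.
    have s1 : S a (ap i a x1).
      by apply/existsP; exists x1; rewrite h !eqxx.
    have s2 : S a (ap i a x2).
      by apply/existsP; exists x2; rewrite -e h !eqxx.
    have := proj2 (QuotPi_None S0 Sact Smap _) s1.
    have := proj2 (QuotPi_None S0 Sact Smap _) s2.
    by rewrite /= => -> ->.
  by rewrite (vfun_inj_nz e) //; apply/eqP.
pose j := FE psurj hu.
have jP : forall a x, ap j a (ap p a x) = ap pi a (ap i a x).
  by move=> a x; exact: (FEP psurj hu).
have jinj : forall a, injective (ap j a).
  move=> a x1' x2'; have [x1 <-] := psurj a x1'; have [x2 <-] := psurj a x2'.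
  rewrite !jP => e.
  case E: (ap pi a (ap i a x1)) => [e1|].
    have h1 := QuotPi_Some E; rewrite E in e.
    have h2 := QuotPi_Some (esym e).
    by rewrite (iinj a x1 x2) // -h1 h2.
  have s1 := proj1 (QuotPi_None S0 Sact Smap _) E.
  rewrite E in e.
  have s2 := proj1 (QuotPi_None S0 Sact Smap _) (esym e).
  by rewrite !Sp0.
have pisurj : forall a y, exists x, ap pi a x = y.
  move=> a y; exact: QuotPi_surj.
have Hc : comm_sq (C:=C) i p pi j.
  by move=> a x; exact: esym (jP a x).
have HP : PP i pi j.
  move=> a y x'; have [x <-] := psurj a x'; rewrite jP => e.
  case E: (ap pi a y) e => [e1|] e.
    have h1 := QuotPi_Some E; have h2 := QuotPi_Some (esym e).
    by exists x; rewrite -h2 h1.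
  have /existsP [x0 /andP [_ /eqP h]] := proj1 (QuotPi_None S0 Sact Smap _) E.
  by exists x0.
exists (QuotF S0 Sact Smap), pi, j.
split; first exact/mono_inj.
split; first exact/epi_surj.
split; first exact: PP_pullback.
exact: PP_pushout.
Qed.

End ProtoAb.

Lemma In_pmap (X T : Type) (f : T -> option X) (s : seq T) x :
  List.In x (pmap f s) -> exists v, f v = Some x.
Proof.
elim: s => [|v s IH] //=.
case E: (f v) => [y|] //=.
by move=> [<-|h]; [exists v | exact: IH].
Qed.

Lemma pmap_In (X : Type) (T : eqType) (f : T -> option X) (s : seq T) v x :
  v \in s -> f v = Some x -> List.In x (pmap f s).
Proof.
elim: s => [|w s IH] //=; rewrite inE => /orP [/eqP <-|h] e.
  by rewrite e; left.
by case: (f w) => [y|] /=; [right|]; exact: IH h e.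
Qed.

Lemma fin_cover (X : Type) (P : X -> Prop) (R : X -> X -> Prop) (T : finType)
  (c : X -> T) :
  (forall x y, P x -> P y -> c x = c y -> R x y) ->
  exists l : list X, (forall x, List.In x l -> P x) /\
    forall x, P x -> exists y, List.In y l /\ R x y.
Proof.
move=> HR.
pose ch (v : T) : option X :=
  match excluded_middle_informative (exists x, P x /\ c x = v) with
  | left h => Some (proj1_sig (constructive_indefinite_description _ h))
  | right _ => None end.
have chP : forall v x, ch v = Some x -> P x /\ c x = v.
  move=> v x; rewrite /ch.
  case: excluded_middle_informative => // h [<-].
  exact: proj2_sig (constructive_indefinite_description _ h).
exists (pmap ch (enum T)); split.
  move=> x hx; have [v hv] := In_pmap hx; exact: (proj1 (chP _ _ hv)).
move=> x Px.
have : ch (c x) <> None.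
  rewrite /ch; case: excluded_middle_informative => // h.
  by case: h; exists x.
case E: (ch (c x)) => [y|] // _.
have [Py ey] := chP _ _ E.
exists y; split; first by apply: (@pmap_In _ _ ch _ (c x)); rewrite ?mem_enum.
exact: HR.
Qed.

Lemma In_tnth (T : Type) (l : list T) x :
  List.In x l -> exists k : 'I_(size l), tnth (in_tuple l) k = x.
Proof.
elim: l => [|y l IH] //= [<-|h].
  by exists ord0; rewrite (tnth_nth y).
have [k hk] := IH h.
have hk1 : k.+1 < size (y :: l) by rewrite /= ltnS.
by exists (Ordinal hk1); rewrite (tnth_nth y) /= -hk (tnth_nth y).
Qed.

Section Ext.
Variables (gT : finGroupType) (M : SCat).
Notation VF := (VFun gT M).
Local Notation ap t a := (vfun (ntc t a)).
Local Notation fm F f := (vfun (fmor F f)).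
Notation C := (FunCat gT M).

Lemma zero_triv (z : VF) : is_zero_obj (C:=C) z ->
  forall a (w : vcar (fobj z a)), w = vzero _.
Proof.
move=> Hz a w; have [[f Hf] _] := Hz z.
have h1 : forall a x, ap (VNat_id z) a x = ap f a x := Hf (VNat_id z).
have h2 : forall a x, ap (VNat0 z z) a x = ap f a x := Hf (VNat0 z z).
by have := h1 a w; rewrite -h2.
Qed.

Variables (A Cc : VF).

Definition sesF (B : VF) (i : VNat A B) (p : VNat B Cc) : Prop :=
  (forall a, injective (ap i a)) /\ (forall a c, exists y, ap p a y = c) /\
  (forall a x, ap p a (ap i a x) = vzero _) /\
  (forall a y, ap p a y = vzero _ -> exists x, ap i a x = y).

Lemma adm_facts (z : VF) (Hz : is_zero_obj (C:=C) z) (s : ses_data (C:=C) A Cc) :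
  is_adm_ses (@is_mono C) (@is_epi C) z s -> sesF (ses_i s) (ses_p s).
Proof.
move=> [/mono_inj iinj [/epi_surj psurj [u [v [Hpb _]]]]].
have zt := zero_triv Hz.
have vinj : forall a, injective (ap v a) by move=> a w1 w2 _; rewrite (zt _ w1) (zt _ w2).
have Hc : forall a x, ap (ses_p s) a (ap (ses_i s) a x) = ap v a (ap u a x) := proj1 Hpb.
split; first exact: iinj.
split; first exact: psurj.
split; first by move=> a x; rewrite Hc (zt _ (ap u a x)) vfun0.
move=> a y hy.
have HP : PP (ses_i s) (ses_p s) v := pullback_PP vinj Hpb.
apply: (HP a y (vzero _)).
by rewrite hy vfun0.
Qed.

Section Facts.
Variables (B : VF) (i : VNat A B) (p : VNat B Cc).

Definition phi (a : sobj M) (y : vcar (fobj B a)) :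
  (vcar (fobj A a) + vcar (fobj Cc a))%type :=
  if [pick x | ap i a x == y] is Some x then inl x else inr (ap p a y).

Definition sec (a : sobj M) (c : vcar (fobj Cc a)) : vcar (fobj B a) :=
  odflt (vzero _) [pick y | ap p a y == c].

Hypothesis Hf : sesF i p.

Lemma phi_i (a : sobj M) (x : vcar (fobj A a)) : phi (ap i a x) = inl x.
Proof.
have [iinj _] := Hf.
rewrite /phi; case: pickP => [x0 /eqP e|H]; first by rewrite (iinj a _ _ e).
by move: (H x); rewrite eqxx.
Qed.

Lemma phi_cases (a : sobj M) (y : vcar (fobj B a)) : (exists x, ap i a x = y /\ phi y = inl x) \/
  (ap p a y <> vzero _ /\ phi y = inr (ap p a y)).
Proof.
have [iinj [psurj [pi0 ker]]] := Hf.
case: (eqVneq (ap p a y) (vzero _)) => h.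
  left; have [x hx] := ker a y h; exists x; split => //.
  by rewrite -hx phi_i.
right; split; first exact/eqP.
rewrite /phi; case: pickP => [x0 /eqP e|//].
by move: h; rewrite -e pi0 eqxx.
Qed.

Lemma phi_p (a : sobj M) (y : vcar (fobj B a)) : (if phi y is inr c then c else vzero _) = ap p a y.
Proof.
have [iinj [psurj [pi0 ker]]] := Hf.
by case: (phi_cases y) => [[x [hx ->]]|[h ->]] //; rewrite -hx pi0.
Qed.

Lemma phi_inj (a : sobj M) : injective (@phi a).
Proof.
move=> y1 y2 e.
case: (phi_cases y1) => [[x1 [h1 e1]]|[n1 e1]];
case: (phi_cases y2) => [[x2 [h2 e2]]|[n2 e2]]; rewrite e1 e2 in e; try discriminate.
  by case: e => e; rewrite -h1 -h2 e.
by case: e => e; apply: (vfun_inj_nz e).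
Qed.

Lemma phi_act (a : sobj M) (g : gT) (y : vcar (fobj B a)) : phi (vact g y) =
  (if phi y is inl x then inl (vact g x) else
   if phi y is inr c then inr (vact g c) else phi y).
Proof.
have [iinj [psurj [pi0 ker]]] := Hf.
case: (phi_cases y) => [[x [hx ->]]|[n ->]].
  by rewrite -hx -vfunE phi_i.
case: (phi_cases (vact g y)) => [[x [hx _]]|[n' ->]]; last by rewrite vfunE.
by exfalso; apply: n; rewrite -(vactK g y) -hx -vfunE pi0.
Qed.

Lemma phi_onto a (v : (vcar (fobj A a) + vcar (fobj Cc a))%type) :
  (if v is inr c then c <> vzero _ else True) -> exists y, phi y = v.
Proof.
have [iinj [psurj [pi0 ker]]] := Hf.
case: v => [x _|c hc]; first by exists (ap i a x); rewrite phi_i.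
have [y hy] := psurj a c; exists y.
case: (phi_cases y) => [[x [hx _]]|[_ ->]]; last by rewrite hy.
by exfalso; apply: hc; rewrite -hy -hx pi0.
Qed.

Lemma phi_ok (a : sobj M) (y : vcar (fobj B a)) : if @phi a y is inr c then c <> vzero _ else True.
Proof. by case: (phi_cases y) => [[x [_ ->]]|[h ->]]. Qed.

Lemma sec_nz (a : sobj M) (y : vcar (fobj B a)) : ap p a y <> vzero _ -> sec (ap p a y) = y.
Proof.
rewrite /sec; case: pickP => [y0 /eqP e|H] nz /=.
  by apply: (vfun_inj_nz e); rewrite e.
by move: (H y); rewrite eqxx.
Qed.

End Facts.

Section Psi.
Variables (B1 : VF) (i1 : VNat A B1) (p1 : VNat B1 Cc).
Variables (B2 : VF) (i2 : VNat A B2) (p2 : VNat B2 Cc).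
Hypotheses (H1 : sesF i1 p1) (H2 : sesF i2 p2).
Hypothesis Hcode : forall a b (f : shom a b) (c : vcar (fobj Cc a)),
  phi i1 p1 (fm B1 f (sec p1 c)) = phi i2 p2 (fm B2 f (sec p2 c)).

Definition psif (a : sobj M) (y : vcar (fobj B1 a)) : vcar (fobj B2 a) :=
  if [pick y' | phi i2 p2 y' == phi i1 p1 y] is Some y' then y' else vzero _.

Lemma psiP (a : sobj M) (y : vcar (fobj B1 a)) : phi i2 p2 (@psif a y) = phi i1 p1 y.
Proof.
rewrite /psif; case: pickP => [y' /eqP //|H].
have [y' hy'] := phi_onto H2 (phi_ok H1 y).
by move: (H y'); rewrite hy' eqxx.
Qed.

Definition psimor (a : sobj M) : VMor (fobj B1 a) (fobj B2 a).
Proof.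
refine (@Build_VMor gT _ _ (@psif a) _ _ _).
- apply: (phi_inj H2); rewrite psiP.
  by rewrite -(vfun0 (ntc i1 a)) -(vfun0 (ntc i2 a)) (phi_i H1) (phi_i H2).
- move=> g y; apply: (phi_inj H2).
  by rewrite psiP (phi_act H1) (phi_act H2) psiP.
- move=> y1 y2 e _; exists 1; rewrite vact1.
  by apply: (phi_inj H1); rewrite -!psiP e.
Defined.

Definition psi : VNat B1 B2.
Proof.
refine (@Build_VNat gT M B1 B2 psimor _).
move=> a b f y /=; apply: (phi_inj H2); rewrite psiP.
case: (phi_cases H1 y) => [[x [hx e1]]|[n e1]].
  have -> : psif y = ap i2 a x.
    by apply: (phi_inj H2); rewrite psiP (phi_i H2) -hx (phi_i H1).
  by rewrite -hx -!ntnat (phi_i H1) (phi_i H2).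
have hp2 : ap p2 a (psif y) = ap p1 a y.
  by rewrite -(phi_p H2) psiP e1.
have := Hcode f (ap p1 a y).
have n2 : ap p2 a (psif y) <> vzero _ by rewrite hp2.
by rewrite (sec_nz n) -hp2 (sec_nz n2).
Defined.

Lemma psi_phi (a : sobj M) (y : vcar (fobj B1 a)) : phi i2 p2 (ap psi a y) = phi i1 p1 y.
Proof. exact: psiP. Qed.

End Psi.

End Ext.

Section Fin.
Variables (gT : finGroupType) (M : SCat).
Notation VF := (VFun gT M).
Local Notation ap t a := (vfun (ntc t a)).
Local Notation fm F f := (vfun (fmor F f)).
Notation C := (FunCat gT M).

Variables (lo : list (sobj M)) (hl : forall a b : sobj M, list (shom a b)).
Hypothesis inlo : forall a, List.In a lo.
Hypothesis inhl : forall a b (f : shom a b), List.In f (hl a b).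

Definition ob (k : 'I_(size lo)) : sobj M := tnth (in_tuple lo) k.

Lemma hom_fin (F F' : VF) : hom_finite (C:=C) F F'.
Proof.
have [|l [_ Hl]] := (@fin_cover (VNat F F') (fun _ => True) (@VNat_eq gT M F F') _
  (fun t => [ffun k => [ffun x => ap t (ob k) x]] :
     {dffun forall k : 'I_(size lo),
        {ffun vcar (fobj F (ob k)) -> vcar (fobj F' (ob k))}})).
  move=> s t _ _ e a x.
  have [k ek] := In_tnth (inlo a); subst a.
  move/ffunP: e => /(_ k) /ffunP /(_ x).
  by rewrite !ffunE.
by exists l => f; have := Hl f I.
Qed.

Local Notation U :=
  {k : 'I_(size lo) & {k' : 'I_(size lo) & 'I_(size (hl (ob k) (ob k')))}}.

Definition umor (u : U) : shom (ob (tag u)) (ob (tag (tagged u))) :=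
  tnth (in_tuple (hl _ _)) (tagged (tagged u)).

Local Notation codeT A Cc :=
  {dffun forall u : U, {ffun vcar (fobj Cc (ob (tag u))) ->
     (vcar (fobj A (ob (tag (tagged u)))) + vcar (fobj Cc (ob (tag (tagged u)))))%type}}.

Definition code (A Cc : VF) (s : ses_data (C:=C) A Cc) : codeT A Cc :=
  [ffun u => [ffun c => phi (ses_i s) (ses_p s)
     (fm (ses_mid s) (umor u) (sec (ses_p s) c))]].

Lemma code_spec (A Cc : VF) (s t : ses_data (C:=C) A Cc) : code s = code t ->
  forall a b (f : shom a b) (c : vcar (fobj Cc a)),
  phi (ses_i s) (ses_p s) (fm (ses_mid s) f (sec (ses_p s) c)) =
  phi (ses_i t) (ses_p t) (fm (ses_mid t) f (sec (ses_p t) c)).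
Proof.
move=> e a b f c.
have [k ek] := In_tnth (inlo a); have [k' ek'] := In_tnth (inlo b).
subst a b.
have [m em] := In_tnth (inhl f); subst f.
move/ffunP: e => /(_ (existT (fun k0 => {k1 : 'I_(size lo) &
   'I_(size (hl (ob k0) (ob k1)))}) k
   (existT (fun k1 => 'I_(size (hl (ob k) (ob k1)))) k' m))) /ffunP /(_ c).
by rewrite !ffunE.
Qed.

Lemma ext_fin (z : VF) (Hz : is_zero_obj (C:=C) z) (A Cc : VF) :
  ext_finite (@is_mono C) (@is_epi C) z A Cc.
Proof.
apply: (@fin_cover _ _ _ _ (@code A Cc)).
move=> s t hs ht e.
have H1 := adm_facts Hz hs; have H2 := adm_facts Hz ht.
have Hc := code_spec e.
have Hc' : forall a b (f : shom a b) (c : vcar (fobj Cc a)),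
  phi (ses_i t) (ses_p t) (fm (ses_mid t) f (sec (ses_p t) c)) =
  phi (ses_i s) (ses_p s) (fm (ses_mid s) f (sec (ses_p s) c)).
  by move=> a b f c; rewrite Hc.
pose ps := psi H1 H2 Hc; pose ps' := psi H2 H1 Hc'.
have K1 : forall a y, ap ps' a (ap ps a y) = y.
  move=> a y; apply: (phi_inj H1).
  by rewrite (psi_phi H2 H1 Hc') (psi_phi H1 H2 Hc).
have K2 : forall a y, ap ps a (ap ps' a y) = y.
  move=> a y; apply: (phi_inj H2).
  by rewrite (psi_phi H1 H2 Hc) (psi_phi H2 H1 Hc').
exists ps; split.
  by exists ps'; split => a y; [exact: K1 | exact: K2].
split.
  move=> a x; apply: (phi_inj H2).
  by rewrite (psi_phi H1 H2 Hc) (phi_i H1) (phi_i H2).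
move=> a y.
by rewrite /= -(phi_p H2) (psi_phi H1 H2 Hc) (phi_p H1).
Qed.

End Fin.

Theorem mainTheorem4 (gT : finGroupType) (M : SCat) :
  abelian [set: gT] ->
  proto_abelian (FunCat gT M) /\
  (finite_scat M ->
     @finitary (FunCat gT M) (@is_mono (FunCat gT M)) (@is_epi (FunCat gT M))).
Proof.
move=> _; split; first exact: proto_ab.
move=> [[lo inlo] Hh].
pose hl a b := proj1_sig (constructive_indefinite_description _ (Hh a b)).
have inhl : forall a b (f : shom a b), List.In f (hl a b).
  by move=> a b; exact: proj2_sig (constructive_indefinite_description _ (Hh a b)).
split; first by move=> F F'; exact: hom_fin inlo F F'.
by move=> z Hz A Cc; exact: (@ext_fin gT M lo hl inlo inhl z Hz A Cc).
Qed.
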